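(* For all integers $n$ define $B(n)=\sum_{k\in\mathbb{Z}}\binom{n}{k}^2\binom{n+k}{k}$. Then for all integers $n>0$, $B(-n) = (-1)^{n-1}B(n-1)$.
   Context: For all integers $n, k$, the binomial coefficient is defined by $\binom{n}{k} = \lim_{z \to 0} \frac{\Gamma(z+n+1)}{\Gamma(z+k+1)\Gamma(z+n-k+1)}$; this is a finite integer for all $n,k\in\mathbb{Z}$, agrees with the usual one for $n\ge0$, and satisfies $\binom{n}{k}=\binom{n}{n-k}$. For $n \ge 0$, $B(n)=\sum_{k=0}^n\binom{n}{k}^2\binom{n+k}{k}$. *)

(* Defs.v *)
From HB Require Import structures.
From mathcomp Require Import all_boot all_order all_algebra.
Set Implicit Arguments. Unset Strict Implicit. Unset Printing Implicit Defensive.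
Import Order.TTheory GRing.Theory Num.Theory.
Local Open Scope ring_scope.

(* Binomial coefficient binom(n,k) for all integers n, k, as given by
   lim_{z->0} Gamma(z+n+1) / (Gamma(z+k+1) Gamma(z+n-k+1)), written out
   explicitly case by case (Posz m = m >= 0, Negz m = -(m+1)):
   - n >= 0 :  usual binomial 'C(n,k) if k >= 0, and 0 if k < 0;
   - n < 0, k >= 0 :  (-1)^k * binom(-n+k-1, k);
   - n < 0, k <= n :  (-1)^(n-k) * binom(-k-1, n-k);
   - n < 0, n < k < 0 :  0. *)
Definition binz (n k : int) : int :=
  match n, k with
  | Posz n', Posz k' => ('C(n', k'))%:Z
  | Posz _, Negz _ => 0
  | Negz n', Posz k' => (-1) ^+ k' * ('C(n' + k', k'))%:Z
  | Negz n', Negz k' =>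
      if (n' <= k')%N then (-1) ^+ (k' - n') * ('C(k', k' - n'))%:Z else 0
  end.

Definition Bterm (n k : int) : int := binz n k ^+ 2 * binz (n + k) k.

(* The summand vanishes
   outside k in [0, |n|] (n >= 0) resp. [0, -n-1] (n < 0), so the sum over
   Z equals the finite sum over the window k in [-(|n|+1), |n|+1]. *)
Definition B (n : int) : int :=
  \sum_(i < (2 * `|n| + 3)%N) Bterm n (i%:Z - (`|n| + 1)%:Z).

(* Main.v *)
Require Import Defs.
From HB Require Import structures.
From mathcomp Require Import all_boot all_order all_algebra.
Import Order.TTheory GRing.Theory Num.Theory.
Local Open Scope ring_scope.
From mathcomp Require Import zify ring lra.
Lemma negzE' (a b : nat) : (a < b)%N -> a%:Z - b%:Z = Negz (b - a.+1)%N.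
Proof. move=> h; rewrite NegzE; lia. Qed.

Lemma poszE' (a b : nat) : (b <= a)%N -> a%:Z - b%:Z = Posz (a - b)%N.
Proof. move=> h; lia. Qed.

Lemma window (N M : nat) (F : int -> int) : (M <= N.+1)%N ->
  (forall k : nat, (M < k)%N -> F k = 0) -> (forall k : nat, F (Negz k) = 0) ->
  \sum_(i < (2 * N + 3)%N) F (i%:Z - (N + 1)%:Z) = \sum_(k < M.+1) F k.
Proof.
move=> hM hpos hneg.
rewrite -(big_mkord xpredT (fun i => F (i%:Z - (N + 1)%:Z))).
rewrite (big_cat_nat _ (n := (N+1)%N)) //=; last by lia.
rewrite big1_seq ?add0r; last first.
  move=> i; rewrite mem_index_iota => /andP[_ hi].
  by rewrite negzE'.
rewrite -{1}(add0n (N+1)%N) big_addn.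
have -> : (2 * N + 3 - (N + 1) = M.+1 + (N.+1 - M))%N by lia.
rewrite big_mkord (big_split_ord) /= [X in _ + X]big1 ?addr0.
  by apply: eq_bigr => i _; rewrite poszE' ?leq_addl // addnK.
move=> i _; rewrite poszE' ?leq_addl // addnK hpos //; lia.
Qed.
Lemma Bpos m : B (Posz m) = \sum_(k < m.+1) ('C(m,k)%:Z)^+2 * 'C(m+k,k)%:Z.
Proof.
rewrite /B /= (@window m m (Bterm m)) //.
- by move=> k hk; rewrite /Bterm /= bin_small // expr0n mul0r.
- by move=> k; rewrite /Bterm /= expr0n mul0r.
Qed.

Lemma Bneg m : B (Negz m) =
  \sum_(k < m.+1) (-1)^+k * ('C(m+k,k)%:Z)^+2 * 'C(m,k)%:Z.
Proof.
rewrite /B /= (@window m.+1 m (Bterm (Negz m))) //.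
- apply: eq_bigr => [[k hk]] _ /=; rewrite /Bterm.
  have -> : Negz m + k = Negz (m - k) by rewrite !NegzE; lia.
  rewrite /= subnK; last by lia.
  rewrite exprMn -exprM mulnC exprM (_ : (-1:int)^+2 = 1) // expr1n mul1r; ring.
- by rewrite leqW.
- move=> k hk; rewrite /Bterm.
  have -> : Negz m + k = Posz (k - m.+1). by rewrite NegzE addrC subzn.
  by rewrite /= (@bin_small (k - m.+1)) ?mulr0 //; lia.
- move=> k; rewrite /Bterm.
  have -> : Negz m + Negz k = Negz (m + k).+1 by rewrite !NegzE; lia.
  rewrite /= (_ : (m + k < k)%N = false) ?mulr0 //; lia.
Qed.
Lemma Dlem p c d : \sum_(i < p.+1) (-1)^+i * ('C(p,i))%:Z * ('C(c+i, d+p))%:Z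
  = (-1)^+p * ('C(c,d))%:Z.
Proof.
elim: p d => [|p IH] d.
  by rewrite big_ord1 /= !addn0 bin0 mulr1.
pose f i := ('C(c+i, d+p.+1))%:Z.
pose U := \sum_(i < p.+1) (-1)^+i * ('C(p,i))%:Z * f i.+1.
pose T := \sum_(i < p.+1) (-1)^+i * ('C(p,i))%:Z * f i.
pose V := \sum_(i < p.+1) (-1)^+i * ('C(p,i.+1))%:Z * f i.+1.
have eL : \sum_(i < p.+2) (-1)^+i * ('C(p.+1,i))%:Z * f i = f 0%N - V - U.
  rewrite big_ord_recl /= expr0 bin0 !mul1r.
  rewrite /V /U -addrA -opprD -big_split /= -sumrN; congr (_ + _).
  apply: eq_bigr => i _; rewrite /bump /= add1n binS exprS PoszD; ring.
have eT : T = f 0%N - V.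
  rewrite /T big_ord_recl /= expr0 bin0 !mul1r /V big_ord_recr /= bin_small //.
  rewrite mulr0 mul0r addr0 -sumrN; congr (_ + _).
  by apply: eq_bigr => i _; rewrite /bump /= add1n exprS; ring.
have -> : \sum_(i < p.+2) (-1)^+i * ('C(p.+1,i))%:Z * ('C(c+i, d+p.+1))%:Z
   = T - U by rewrite eL eT; ring.
rewrite /T /U -sumrB.
have -> : (-1) ^+ p.+1 * ('C(c, d))%:Z = - ((-1) ^+ p * ('C(c, d))%:Z) by rewrite exprS; ring.
rewrite -(IH d) -sumrN; apply: eq_bigr => i _.
rewrite /f (addnS c i) (addnS d p) binS PoszD; ring.
Qed.

Lemma binmul j p i : (i <= p)%N ->
  ('C(j+p, j+i) * 'C(j+i, j) = 'C(j+p, j) * 'C(p, i))%N.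
Proof.
move=> hip.
have H1 := @bin_fact (j+p) (j+i); rewrite subnDl leq_add2l in H1; have {}H1 := H1 hip.
have H2 := @bin_fact (j+i) j; rewrite addKn leq_addr in H2; have {}H2 := H2 isT.
have H3 := @bin_fact (j+p) j; rewrite addKn leq_addr in H3; have {}H3 := H3 isT.
have H4 := @bin_fact p i hip.
have K : (0 < j`! * i`! * (p-i)`!)%N by rewrite !muln_gt0 !fact_gt0.
apply/eqP; rewrite -(eqn_pmul2r K); apply/eqP.
transitivity ('C(j + p, j + i) * ('C(j + i, j) * (j`! * i`!)) * (p-i)`!)%N.
  ring.
rewrite H2.
transitivity ('C(j + p, j + i) * ((j + i)`! * (p-i)`!))%N; first ring.
rewrite H1 -H3.
transitivity ('C(j + p, j) * j`! * ('C(p, i) * (i`! * (p - i)`!)))%N; last ring.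
by rewrite H4 mulnA.
Qed.

Lemma Posz_sum n (F : 'I_n -> nat) : Posz (\sum_(i < n) F i)%N = \sum_(i < n) (F i)%:Z.
Proof. by rewrite -natz natr_sum; apply: eq_bigr => i _; rewrite natz. Qed.

Lemma key m j : (j <= m)%N ->
  \sum_(k < m.+1) (-1)^+k * ('C(m+k,k))%:Z * ('C(m,k) * 'C(k,j))%:Z
  = (-1)^+m * ('C(m,j) * 'C(m+j,j))%:Z.
Proof.
move=> hjm; have [p ->] : exists p, m = (j + p)%N by exists (m - j)%N; lia.
rewrite -(big_mkord xpredT (fun k => (-1)^+k * ('C(j+p+k,k))%:Z * ('C(j+p,k) * 'C(k,j))%:Z)).
rewrite (big_cat_nat _ (n := j)) //=; last by lia.
rewrite big1_seq ?add0r; last first.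
  move=> k; rewrite mem_index_iota => /andP[_ hk].
  by rewrite (@bin_small k j) // muln0 mulr0.
rewrite -{1}(add0n j) big_addn.
have -> : ((j + p).+1 - j = p.+1)%N by lia.
rewrite big_mkord.
transitivity ((-1)^+j * ('C(j+p,j))%:Z *
   \sum_(i < p.+1) (-1)^+i * ('C(p,i))%:Z * ('C((j+j+p)+i, j+p))%:Z).
  rewrite mulr_sumr; apply: eq_bigr => i _.
  rewrite (addnC i j) binmul; last by rewrite -ltnS.
  have hle : (j + i <= j + p + (j + i))%N by lia.
  rewrite -(bin_sub hle) (_ : (j + p + (j + i) - (j + i) = j + p)%N); last by lia.
  rewrite (_ : (j + p + (j + i) = j + j + p + i)%N); last by lia.
  rewrite exprD PoszM; ring.
rewrite Dlem exprD PoszM (_ : (j + p + j = j + j + p)%N); last by lia.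
ring.
Qed.

Lemma vand' m k : (k <= m)%N ->
  'C(m+k,k) = (\sum_(j < m.+1) 'C(m,j) * 'C(k,j))%N.
Proof.
move=> hkm; rewrite -(binomial.Vandermonde m k k) (big_ord_widen m.+1 (fun j => 'C(m,j) * 'C(k, k - j))%N) //.
rewrite big_mkcond /=; apply: eq_bigr => [[j hj]] _ /=.
case: ifP => h.
  by rewrite bin_sub.
by rewrite (@bin_small k j) ?muln0 //; lia.
Qed.

Lemma ident m : \sum_(k < m.+1) (-1)^+k * (('C(m+k,k))%:Z)^+2 * ('C(m,k))%:Z
  = (-1)^+m * \sum_(k < m.+1) (('C(m,k))%:Z)^+2 * ('C(m+k,k))%:Z.
Proof.
transitivity (\sum_(k < m.+1) \sum_(j < m.+1)
   ('C(m,j))%:Z * ((-1)^+k * ('C(m+k,k))%:Z * ('C(m,k) * 'C(k,j))%:Z)).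
  apply: eq_bigr => [[k hk]] _ /=.
  rewrite expr2 {2}(@vand' m k); last by rewrite -ltnS.
  rewrite (big_morph Posz PoszD (erefl (Posz 0))) !mulr_sumr mulr_suml; apply: eq_bigr => j _.
  rewrite !PoszM; ring.
rewrite exchange_big /= mulr_sumr; apply: eq_bigr => [[j hj]] _ /=.
rewrite -mulr_sumr key; last by rewrite -ltnS.
rewrite PoszM; ring.
Qed.

Theorem mainTheorem7 (n : int) (hn : 0 < n) :
  B (- n) = (-1) ^+ (`|n| - 1)%N * B (n - 1).
Proof.
case: n hn => [[|m]|m] // _.
have -> : - Posz m.+1 = Negz m by rewrite NegzE.
have -> : Posz m.+1 - 1 = Posz m by rewrite -addn1 PoszD addrK.
by rewrite /= subn1 /= Bneg Bpos ident.
Qed.
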